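(* Let $G$ be a connected undirected simple graph on $n$ vertices with edge set $\mathcal E$ and nominal positive edge weights $\{\omega_{0,ij}\}_{\{i,j\}\in\mathcal E}$, with Laplacian $L_0$. For each edge let $\alpha_{\omega_{ij}}\in[0,1)$, and let $L$ be the Laplacian of the same graph with weights $\omega_{ij}$ satisfying $(1-\alpha_{\omega_{ij}})\omega_{0,ij}\le\omega_{ij}\le(1+\alpha_{\omega_{ij}})\omega_{0,ij}$. Put $\Delta=\sum_{\{i,j\}\in\mathcal E}\alpha_{\omega_{ij}}\omega_{0,ij}(e_i-e_j)(e_i-e_j)^\top$ and $a=\|L_0^\dagger\Delta\|$ (spectral norm), and assume $a<1$. Then $$(1-a)L_0\preceq L\preceq(1+a)L_0,$$ and, with zero time delay, the steady-state covariances $\Sigma=\frac12b^2L^\dagger$ and $\Sigma_0=\frac12b^2L_0^\dagger$ (same $b$) satisfy $(1-\varepsilon_\omega^-)\Sigma_0\preceq\Sigma\preceq(1+\varepsilon_\omega^+)\Sigma_0$, where $\varepsilon_\omega^-=\frac{\|\Delta L_0^\dagger\|}{1+\|\Delta L_0^\dagger\|}$ and $\varepsilon_\omega^+=\frac{\|\Delta L_0^\dagger\|}{1-\|\Delta L_0^\dagger\|}$.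
   Context: The Laplacian of a weighted graph with weights $\omega_{ij}$ is $L=\sum_{\{i,j\}\in\mathcal E}\omega_{ij}(e_i-e_j)(e_i-e_j)^\top$, where $e_k$ are standard basis vectors. $L^\dagger$ is the Moore–Penrose pseudoinverse. For zero delay, the network $\mathrm dx_t=-Lx_t\,\mathrm dt+b\,\mathrm dw_t$ ($w_t$ standard Brownian motion, $b\neq0$) has observables $y=(I_n-\frac1n\mathbf 1\mathbf 1^\top)x$ with steady-state law $\mathcal N(0,\frac12b^2L^\dagger)$. $A\preceq B$ means $B-A$ is positive semidefinite. *)

(* Defs.v *)
From HB Require Import structures.
From mathcomp Require Import all_boot all_order all_algebra.
From mathcomp Require Import boolp classical_sets reals.
Set Implicit Arguments. Unset Strict Implicit. Unset Printing Implicit Defensive.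
Import Order.TTheory GRing.Theory Num.Theory.
Local Open Scope ring_scope.
Local Open Scope classical_set_scope.

Section Defs.
Variable R : realType.

Definition basis_vec n (i : 'I_n) : 'cV[R]_n := delta_mx i 0.

Definition edge_mx n (i j : 'I_n) : 'M[R]_n :=
  (basis_vec i - basis_vec j) *m (basis_vec i - basis_vec j)^T.

Definition simple_graph n (adj : rel 'I_n) : Prop :=
  (forall i, ~~ adj i i) /\ (forall i j, adj i j = adj j i).

Definition connected_graph n (adj : rel 'I_n) : Prop :=
  forall i j, connect adj i j.

(* Weighted Laplacian: each undirected edge {i,j} is counted once, as the
   ordered pair with i < j; the weight of {i,j} is w i j for i < j. *)
Definition laplacian n (adj : rel 'I_n) (w : 'I_n -> 'I_n -> R) : 'M[R]_n :=
  \sum_(i < n) \sum_(j < n | (i < j)%N && adj i j) w i j *: edge_mx i j.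

Definition penrose m n (A : 'M[R]_(m, n)) (X : 'M[R]_(n, m)) : Prop :=
  [/\ A *m X *m A = A, X *m A *m X = X,
      (A *m X)^T = A *m X & (X *m A)^T = X *m A].

(* Moore-Penrose pseudoinverse: the (unique, existing) X satisfying the
   Penrose conditions. *)
Definition pinv m n (A : 'M[R]_(m, n)) : 'M[R]_(n, m) :=
  xget 0 [set X | penrose A X].

Definition norm2 n (x : 'cV[R]_n) : R := Num.sqrt (\sum_i x i 0 ^+ 2).

Definition spec_norm m n (A : 'M[R]_(m, n)) : R :=
  sup [set norm2 (A *m x) | x in [set x : 'cV[R]_n | norm2 x = 1]].

Definition psd n (A : 'M[R]_n) : Prop :=
  A^T = A /\ forall x : 'cV[R]_n, 0 <= (x^T *m A *m x) 0 0.

Definition loewner_le n (A B : 'M[R]_n) : Prop := psd (B - A).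

Definition steady_cov n (b : R) (L : 'M[R]_n) : 'M[R]_n :=
  (b ^+ 2 / 2) *: pinv L.

End Defs.

(* Main.v *)
Require Import Defs.
From HB Require Import structures.
From mathcomp Require Import all_boot all_order all_algebra.
From mathcomp Require Import boolp classical_sets reals.
From mathcomp Require Import ring lra zify.
Set Implicit Arguments. Unset Strict Implicit. Unset Printing Implicit Defensive.
Import Order.TTheory GRing.Theory Num.Theory.
Local Open Scope ring_scope.
Local Open Scope classical_set_scope.

Section Aux.
Variable R : realType.

Definition dot n (u v : 'cV[R]_n) : R := (u^T *m v) 0 0.
Definition qf n (M : 'M[R]_n) (x : 'cV[R]_n) : R := dot x (M *m x).

Lemma dotE n (u v : 'cV[R]_n) : dot u v = \sum_k u k 0 * v k 0.
Proof. by rewrite /dot mxE; apply: eq_bigr => k _; rewrite mxE. Qed.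

Lemma dotC n (u v : 'cV[R]_n) : dot u v = dot v u.
Proof. by rewrite !dotE; apply: eq_bigr => k _; rewrite mulrC. Qed.

Lemma dotDr n (u v w : 'cV[R]_n) : dot u (v + w) = dot u v + dot u w.
Proof. by rewrite /dot mulmxDr mxE. Qed.

Lemma dotZr n (c : R) (u v : 'cV[R]_n) : dot u (c *: v) = c * dot u v.
Proof. by rewrite /dot -scalemxAr mxE. Qed.

Lemma dotNr n (u v : 'cV[R]_n) : dot u (- v) = - dot u v.
Proof. by rewrite -scaleN1r dotZr mulN1r. Qed.

Lemma dotBr n (u v w : 'cV[R]_n) : dot u (v - w) = dot u v - dot u w.
Proof. by rewrite dotDr dotNr. Qed.

Lemma dotDl n (u v w : 'cV[R]_n) : dot (v + w) u = dot v u + dot w u.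
Proof. by rewrite dotC dotDr !(dotC u). Qed.

Lemma dotZl n (c : R) (u v : 'cV[R]_n) : dot (c *: v) u = c * dot v u.
Proof. by rewrite dotC dotZr dotC. Qed.

Lemma dotBl n (u v w : 'cV[R]_n) : dot (v - w) u = dot v u - dot w u.
Proof. by rewrite dotC dotBr !(dotC u). Qed.

Lemma dot0r n (u : 'cV[R]_n) : dot u 0 = 0.
Proof. by rewrite /dot mulmx0 mxE. Qed.

Lemma dot_mul n (M : 'M[R]_n) (u v : 'cV[R]_n) : dot u (M *m v) = dot (M^T *m u) v.
Proof. by rewrite /dot trmx_mul trmxK mulmxA. Qed.

Lemma dot_sym n (M : 'M[R]_n) (u v : 'cV[R]_n) : M^T = M -> dot u (M *m v) = dot v (M *m u).
Proof. by move=> HM; rewrite dot_mul HM dotC. Qed.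

Lemma dotxx_ge0 n (u : 'cV[R]_n) : 0 <= dot u u.
Proof. by rewrite dotE; apply: sumr_ge0 => k _; rewrite -expr2 sqr_ge0. Qed.

Lemma dotxx_eq0 n (u : 'cV[R]_n) : dot u u = 0 -> u = 0.
Proof.
rewrite dotE => H; apply/matrixP => i j; rewrite ord1 mxE.
have hp : forall k, xpredT k -> 0 <= u k 0 * u k 0 by move=> k _; rewrite -expr2 sqr_ge0.
have := @psumr_eq0P _ _ xpredT (fun k => u k 0 * u k 0) hp H i isT.
by move/eqP; rewrite -expr2 sqrf_eq0 => /eqP.
Qed.

Lemma qf_comb n (M : 'M[R]_n) (u v : 'cV[R]_n) (a b : R) : M^T = M ->
  qf M (a *: u + b *: v) = a ^+ 2 * qf M u + 2 * a * b * dot u (M *m v) + b ^+ 2 * qf M v.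
Proof.
move=> HM; rewrite /qf mulmxDr -!scalemxAr !dotDr !dotDl !dotZr !dotZl.
rewrite (dot_sym v u HM); ring.
Qed.

Lemma CS n (M : 'M[R]_n) (u v : 'cV[R]_n) : M^T = M ->
  (forall x, 0 <= qf M x) ->
  dot u (M *m v) ^+ 2 <= qf M u * qf M v.
Proof.
move=> HM Hp; set q := dot u (M *m v); set p := qf M u; set r := qf M v.
have hp : 0 <= p by apply: Hp. have hr : 0 <= r by apply: Hp.
have h1 := Hp (r *: u + (- q) *: v); rewrite qf_comb // -/p -/q -/r in h1.
have h2 := Hp ((- q) *: u + p *: v); rewrite qf_comb // -/p -/q -/r in h2.
have h3 := Hp (1 *: u + (- q) *: v); rewrite qf_comb // -/p -/q -/r in h3.
have [r0|rpos] := eqVneq r 0.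
  have [p0|ppos] := eqVneq p 0.
    rewrite p0 r0 in h3 *; nra.
  have pp : 0 < p by rewrite lt0r ppos.
  rewrite r0 in h2 *. nra.
have rp : 0 < r by rewrite lt0r rpos.
nra.
Qed.


Lemma norm2E n (x : 'cV[R]_n) : norm2 x = Num.sqrt (dot x x).
Proof. by rewrite /norm2 dotE; congr Num.sqrt; apply: eq_bigr => k _; rewrite expr2. Qed.

Lemma norm2_ge0 n (x : 'cV[R]_n) : 0 <= norm2 x.
Proof. by rewrite norm2E sqrtr_ge0. Qed.

Lemma norm2_sqr n (x : 'cV[R]_n) : norm2 x ^+ 2 = dot x x.
Proof. by rewrite norm2E sqr_sqrtr // dotxx_ge0. Qed.

Lemma norm2Z n (c : R) (x : 'cV[R]_n) : norm2 (c *: x) = `|c| * norm2 x.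
Proof.
by rewrite !norm2E dotZl dotZr mulrA -expr2 sqrtrM ?sqr_ge0 // sqrtr_sqr.
Qed.

Lemma norm2_eq0 n (x : 'cV[R]_n) : norm2 x = 0 -> x = 0.
Proof.
move=> h; apply: dotxx_eq0; have := norm2_sqr x; rewrite h expr0n /= => <-.
by [].
Qed.

Lemma dot_le n (u v : 'cV[R]_n) : dot u v <= norm2 u * norm2 v.
Proof.
have h := @CS n 1%:M u v (trmx1 _ _) (fun x => ltac:(rewrite /qf mul1mx; exact: dotxx_ge0)).
rewrite /qf !mul1mx -!norm2_sqr in h.
have h1 := norm2_ge0 u; have h2 := norm2_ge0 v.
rewrite -exprMn in h.
move: h; set d := dot u v; set N := norm2 u * norm2 v => h.
have hN : 0 <= N by rewrite mulr_ge0.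
have [hd|hd] := lerP d 0; first exact: le_trans hd hN.
rewrite -(@ler_pXn2r _ 2) // ?nnegrE //; exact: ltW.
Qed.

Lemma unit_vec n (x : 'cV[R]_n) : x != 0 -> norm2 ((norm2 x)^-1 *: x) = 1.
Proof.
move=> hx; rewrite norm2Z.
have hn : norm2 x != 0 by apply/eqP => /norm2_eq0; apply/eqP.
rewrite ger0_norm ?invr_ge0 ?norm2_ge0 // mulVf //.
Qed.

Section Spec.
Variable n : nat.
Implicit Types M : 'M[R]_n.+1.

Definition specset M := [set norm2 (M *m x) | x in [set x : 'cV[R]_n.+1 | norm2 x = 1]].

Lemma spec_normE M : spec_norm M = sup (specset M).
Proof. by []. Qed.

Lemma row_dot M (x : 'cV[R]_n.+1) i : (M *m x) i 0 = dot (row i M)^T x.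
Proof. by rewrite mxE dotE; apply: eq_bigr => k _; rewrite !mxE. Qed.

Lemma specset_has_sup M : has_sup (specset M).
Proof.
split.
  have hx : (delta_mx 0 0 : 'cV[R]_n.+1) != 0.
    by apply/eqP => /matrixP /(_ 0 0); rewrite !mxE !eqxx /= => /eqP; rewrite oner_eq0.
  by exists (norm2 (M *m ((norm2 (delta_mx 0 0 : 'cV[R]_n.+1))^-1 *: delta_mx 0 0))), ((norm2 (delta_mx 0 0 : 'cV[R]_n.+1))^-1 *: delta_mx 0 0) => //; rewrite /= unit_vec.
exists (Num.sqrt (\sum_i dot (row i M)^T (row i M)^T)).
move=> _ [x hx <-]; rewrite /= in hx.
rewrite norm2E ler_sqrt; last by apply: sumr_ge0 => i _; apply: dotxx_ge0.
rewrite dotE; apply: ler_sum => i _; rewrite -expr2 row_dot.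
have := @CS n.+1 1%:M (row i M)^T x (trmx1 _ _) (fun x => ltac:(rewrite /qf mul1mx; exact: dotxx_ge0)).
by rewrite /qf !mul1mx -(norm2_sqr x) hx expr1n mulr1.
Qed.

Lemma spec_ge0 M : 0 <= spec_norm M.
Proof.
have [[y [x hx _]] _] := specset_has_sup M.
apply: le_trans (norm2_ge0 (M *m x)) _.
by apply: sup_upper_bound; [apply: specset_has_sup | exists x].
Qed.

Lemma spec_le M (x : 'cV[R]_n.+1) : norm2 (M *m x) <= spec_norm M * norm2 x.
Proof.
have [x0|x0] := eqVneq x 0.
  by rewrite x0 mulmx0 !norm2E dot0r sqrtr0 mulr0.
have hn : 0 < norm2 x.
  by rewrite lt0r norm2_ge0 andbT; apply/eqP => /norm2_eq0; apply/eqP.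
have h : norm2 (M *m ((norm2 x)^-1 *: x)) <= spec_norm M.
  by apply: sup_upper_bound; [apply: specset_has_sup | exists ((norm2 x)^-1 *: x) => //; rewrite /= unit_vec].
rewrite -scalemxAr norm2Z ger0_norm ?invr_ge0 ?norm2_ge0 // in h.
by rewrite -ler_pdivrMr // mulrC.
Qed.

Lemma spec_ub M c : (forall x : 'cV[R]_n.+1, norm2 (M *m x) <= c * norm2 x) -> spec_norm M <= c.
Proof.
move=> h; apply: ge_sup; first by case: (specset_has_sup M).
by move=> _ [x /= hx <-]; have := h x; rewrite hx mulr1.
Qed.

Lemma spec_tr M : spec_norm M^T <= spec_norm M.
Proof.
apply: spec_ub => x.
set y := norm2 (M^T *m x).
have h : y ^+ 2 <= norm2 x * spec_norm M * y.
  rewrite /y norm2_sqr -dot_mul.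
  apply: le_trans (dot_le _ _) _.
  rewrite -mulrA ler_wpM2l ?norm2_ge0 //.
  by rewrite /y; apply: spec_le.
have hy : 0 <= y by apply: norm2_ge0.
have hs := spec_ge0 M. have hx := norm2_ge0 x.
rewrite mulrC; move: h; set c := norm2 x * spec_norm M => h.
have hc : 0 <= c by rewrite mulr_ge0.
have [y0|yp] := eqVneq y 0; first by rewrite y0.
have yp' : 0 < y by rewrite lt0r yp hy.
by move: h; rewrite expr2 ler_pM2r.
Qed.

Lemma spec_trE M : spec_norm M^T = spec_norm M.
Proof. by apply/eqP; rewrite eq_le spec_tr /= -{1}(trmxK M) spec_tr. Qed.

End Spec.


Lemma qfD n (M N : 'M[R]_n) x : qf (M + N) x = qf M x + qf N x.
Proof. by rewrite /qf mulmxDl dotDr. Qed.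
Lemma qfZ n c (M : 'M[R]_n) x : qf (c *: M) x = c * qf M x.
Proof. by rewrite /qf -scalemxAl dotZr. Qed.
Lemma qfN n (M : 'M[R]_n) x : qf (- M) x = - qf M x.
Proof. by rewrite -scaleN1r qfZ mulN1r. Qed.
Lemma qfB n (M N : 'M[R]_n) x : qf (M - N) x = qf M x - qf N x.
Proof. by rewrite qfD qfN. Qed.
Lemma qf0 n (x : 'cV[R]_n) : qf 0 x = 0.
Proof. by rewrite /qf mul0mx dot0r. Qed.

Lemma qf_sum n I (r : seq I) (P : pred I) (F : I -> 'M[R]_n) x :
  qf (\sum_(i <- r | P i) F i) x = \sum_(i <- r | P i) qf (F i) x.
Proof.
elim/big_rec2: _ => [|i y1 y2 _ <-]; first by rewrite qf0.
by rewrite qfD.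
Qed.

Lemma tr_sum n I (r : seq I) (P : pred I) (F : I -> 'M[R]_n) :
  (\sum_(i <- r | P i) F i)^T = \sum_(i <- r | P i) (F i)^T.
Proof.
elim/big_rec2: _ => [|i y1 y2 _ <-]; first by rewrite trmx0.
by rewrite linearD.
Qed.

Lemma trv_dot n (v x : 'cV[R]_n) : v^T *m x = (dot v x)%:M.
Proof. apply/matrixP => i j. rewrite !ord1 [RHS]mxE eqxx mulr1n. by []. Qed.

Lemma dot_basis n (i : 'I_n) (x : 'cV[R]_n) : dot (basis_vec R i) x = x i 0.
Proof. by rewrite /dot /basis_vec trmx_delta -rowE mxE. Qed.

Section Lap.
Variable n : nat.
Variable adj : rel 'I_n.
Definition ones : 'cV[R]_n := const_mx 1.

Lemma edge_tr (i j : 'I_n) : (edge_mx R i j)^T = edge_mx R i j.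
Proof. by rewrite /edge_mx trmx_mul trmxK. Qed.

Lemma lap_tr (w : _ -> _ -> R) : (laplacian adj w)^T = laplacian adj w.
Proof.
rewrite /laplacian tr_sum; apply: eq_bigr => i _; rewrite tr_sum.
apply: eq_bigr => j _; rewrite linearZ /=; congr (_ *: _); exact: edge_tr. Qed.

Lemma edge_mul (i j : 'I_n) x : edge_mx R i j *m x =
   dot (basis_vec R i - basis_vec R j) x *: (basis_vec R i - basis_vec R j).
Proof. by rewrite /edge_mx -mulmxA trv_dot mul_mx_scalar. Qed.

Lemma qf_edge (i j : 'I_n) x : qf (edge_mx R i j) x = (x i 0 - x j 0) ^+ 2.
Proof.
rewrite /qf edge_mul dotZr (dotC x) dotBl !dot_basis expr2 //.
Qed.

Lemma qf_lap (w : _ -> _ -> R) x : qf (laplacian adj w) x =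
  \sum_(i < n) \sum_(j < n | (i < j)%N && adj i j) w i j * (x i 0 - x j 0) ^+ 2.
Proof.
rewrite /laplacian qf_sum; apply: eq_bigr => i _; rewrite qf_sum.
by apply: eq_bigr => j _; rewrite qfZ qf_edge.
Qed.

Lemma lap_ones (w : _ -> _ -> R) : laplacian adj w *m ones = 0.
Proof.
rewrite /laplacian mulmx_suml big1 // => i _; rewrite mulmx_suml big1 // => j _.
rewrite -scalemxAl edge_mul dotBl !dot_basis !mxE subrr scale0r scaler0 //.
Qed.

Lemma lapB (w1 w2 : _ -> _ -> R) : laplacian adj (fun i j => w1 i j - w2 i j) = laplacian adj w1 - laplacian adj w2.
Proof.
rewrite /laplacian -sumrB; apply: eq_bigr => i _; rewrite -sumrB.
by apply: eq_bigr => j _; rewrite scalerBl.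
Qed.

Lemma lapD (w1 w2 : _ -> _ -> R) : laplacian adj (fun i j => w1 i j + w2 i j) = laplacian adj w1 + laplacian adj w2.
Proof.
rewrite /laplacian -big_split; apply: eq_bigr => i _; rewrite -big_split.
by apply: eq_bigr => j _; rewrite scalerDl.
Qed.

Lemma qf_lap_le (w1 w2 : _ -> _ -> R) x : (forall i j : 'I_n, (i < j)%N -> adj i j -> w1 i j <= w2 i j) ->
  qf (laplacian adj w1) x <= qf (laplacian adj w2) x.
Proof.
move=> h; rewrite !qf_lap; apply: ler_sum => i _; apply: ler_sum => j /andP [hij ha].
by apply: ler_wpM2r; [apply: sqr_ge0 | apply: h].
Qed.

Lemma qf_lap_ge0 (w : _ -> _ -> R) x : (forall i j : 'I_n, (i < j)%N -> adj i j -> 0 <= w i j) ->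
  0 <= qf (laplacian adj w) x.
Proof.
move=> h; rewrite qf_lap; apply: sumr_ge0 => i _; apply: sumr_ge0 => j /andP [hij ha].
by apply: mulr_ge0; [apply: h | apply: sqr_ge0].
Qed.

Lemma lap_kernel (w : _ -> _ -> R) x : simple_graph adj -> connected_graph adj ->
  (forall i j : 'I_n, (i < j)%N -> adj i j -> 0 < w i j) ->
  qf (laplacian adj w) x = 0 -> forall i j, x i 0 = x j 0.
Proof.
move=> [hirr hsym] hconn hw; rewrite qf_lap => h0.
have hedge : forall i j : 'I_n, (i < j)%N -> adj i j -> x i 0 = x j 0.
  move=> i j hij ha.
  have hterm : forall i' j' : 'I_n, (i' < j')%N && adj i' j' -> 0 <= w i' j' * (x i' 0 - x j' 0) ^+ 2.
    move=> i' j' /andP [h1 h2]; apply: mulr_ge0; [apply: ltW; exact: hw | exact: sqr_ge0].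
  have hrow : forall i' : 'I_n, xpredT i' -> 0 <= \sum_(j' < n | (i' < j')%N && adj i' j') w i' j' * (x i' 0 - x j' 0) ^+ 2.
    by move=> i' _; apply: sumr_ge0 => j'; apply: hterm.
  have hi := @psumr_eq0P _ _ xpredT _ hrow h0 i isT.
  have := @psumr_eq0P _ _ _ _ (hterm i) hi j.
  rewrite hij ha => /(_ isT) /eqP; rewrite mulf_eq0 sqrf_eq0 subr_eq0 gt_eqF ?hw //=.
  by move/eqP.
have hadj : forall i j : 'I_n, adj i j -> x i 0 = x j 0.
  move=> i j ha; have [hij|hji|hij] := ltngtP i j; first exact: hedge.
    by symmetry; apply: hedge => //; rewrite hsym.
  by move: ha; rewrite (val_inj hij) (negbTE (hirr j)).
move=> i j; have /connectP [p hp ->] := hconn i j.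
elim: p i hp => [|k p IH] i //= /andP [hik hp].
by rewrite (hadj _ _ hik); apply: IH.
Qed.

End Lap.


Lemma penrose_uniq n (A X Y : 'M[R]_n) : penrose A X -> penrose A Y -> X = Y.
Proof.
move=> [a1 a2 a3 a4] [b1 b2 b3 b4].
have eX : X *m A *m X = X *m A *m Y.
  transitivity (X *m (A *m X)^T); first by rewrite a3 mulmxA.
  transitivity (X *m ((A *m Y) *m (A *m X))^T); first by rewrite !mulmxA b1.
  transitivity (X *m ((A *m X) *m (A *m Y))); first by rewrite trmx_mul a3 b3.
  by rewrite !mulmxA a2.
have eY : Y *m A *m Y = X *m A *m Y.
  transitivity ((Y *m A)^T *m Y); first by rewrite b4.
  transitivity (((Y *m A) *m (X *m A))^T *m Y); first by rewrite mulmxA -(mulmxA Y A X) -(mulmxA Y) a1.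
  transitivity (((X *m A) *m (Y *m A)) *m Y); first by rewrite trmx_mul a4 b4.
  by rewrite -!mulmxA (mulmxA Y) b2 !mulmxA.
by rewrite -a2 eX -eY b2.
Qed.

Section Pinv.
Variable k : nat.
Local Notation N := k.+1.
Local Notation ones := (@ones N).
Definition Jm : 'M[R]_N := ones *m ones^T.
Definition Pm : 'M[R]_N := 1%:M - (N%:R)^-1 *: Jm.

Lemma Nneq0 : (N%:R : R) != 0.
Proof. by rewrite pnatr_eq0. Qed.

Lemma dot_ones_ones : dot ones ones = N%:R.
Proof.
by rewrite dotE (eq_bigr (fun _ => 1)) ?sumr_const ?card_ord // => i _; rewrite mxE mul1r.
Qed.

Lemma JJ : Jm *m Jm = N%:R *: Jm.
Proof. by rewrite /Jm mulmxA -(mulmxA ones) trv_dot dot_ones_ones mul_mx_scalar -scalemxAl. Qed.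

Lemma Jtr : Jm^T = Jm.
Proof. by rewrite /Jm trmx_mul trmxK. Qed.

Lemma Ptr : Pm^T = Pm.
Proof. by rewrite /Pm linearB linearZ /= Jtr trmx1. Qed.

Variable L : 'M[R]_N.
Hypothesis Ls : L^T = L.
Hypothesis L1 : L *m ones = 0.
Hypothesis Lk : forall x : 'cV[R]_N, L *m x = 0 -> forall i j, x i 0 = x j 0.

Lemma LJ : L *m Jm = 0.
Proof. by rewrite /Jm mulmxA L1 mul0mx. Qed.

Lemma JL : Jm *m L = 0.
Proof. by rewrite -[Jm *m L]trmxK trmx_mul Ls Jtr LJ trmx0. Qed.

Definition Km := L + (N%:R)^-1 *: Jm.

Lemma KJ : Km *m Jm = Jm.
Proof. by rewrite /Km mulmxDl LJ add0r -scalemxAl JJ scalerA mulVf ?Nneq0 ?scale1r. Qed.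

Lemma JK : Jm *m Km = Jm.
Proof. by rewrite /Km mulmxDr JL add0r -scalemxAr JJ scalerA mulVf ?Nneq0 ?scale1r. Qed.

Lemma Ktr : Km^T = Km.
Proof. by rewrite /Km linearD linearZ /= Ls Jtr. Qed.

Lemma K_inj (x : 'cV[R]_N) : Km *m x = 0 -> x = 0.
Proof.
move=> hx.
have e1 : dot ones x = 0.
  have : dot ones (Km *m x) = 0 by rewrite hx dot0r.
  rewrite dot_mul Ktr /Km mulmxDl L1 add0r -scalemxAl /Jm -mulmxA trv_dot dot_ones_ones.
  by rewrite mul_mx_scalar scalerA mulVf ?Nneq0 // scale1r.
have eJ : Jm *m x = 0 by rewrite /Jm -mulmxA trv_dot e1 mul_mx_scalar scale0r.
have eL : L *m x = 0.
  by move: hx; rewrite /Km mulmxDl -scalemxAl eJ scaler0 addr0.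
have hc := Lk eL.
have e0 : x 0 0 = 0.
  move: e1; rewrite dotE (eq_bigr (fun _ => x 0 0)); last by move=> i _; rewrite mxE mul1r (hc i 0).
  rewrite sumr_const card_ord -mulr_natl => /eqP; rewrite mulf_eq0 (negbTE Nneq0) /=.
  by move/eqP.
by apply/matrixP => i j; rewrite ord1 mxE (hc i 0) e0.
Qed.

Lemma K_unit : Km \in unitmx.
Proof.
rewrite -row_free_unit -kermx_eq0; apply/eqP/row_matrixP => i.
rewrite row0; set v := row i (kermx Km).
have hv : v *m Km = 0 by rewrite /v -row_mul mulmx_ker row0.
have : Km *m v^T = 0 by rewrite -Ktr -trmx_mul hv trmx0.
by move/K_inj => /(congr1 trmx); rewrite trmxK trmx0.
Qed.

Definition X0 := invmx Km - (N%:R)^-1 *: Jm.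

Lemma KiJ : invmx Km *m Jm = Jm.
Proof. by rewrite -{1}KJ mulmxA mulVmx ?K_unit // mul1mx. Qed.

Lemma JKi : Jm *m invmx Km = Jm.
Proof. by rewrite -{1}JK -mulmxA mulmxV ?K_unit // mulmx1. Qed.

Lemma L_eq : L = Km - (N%:R)^-1 *: Jm.
Proof. by rewrite /Km addrK. Qed.

Lemma LX0 : L *m X0 = Pm.
Proof.
rewrite /X0 mulmxBr -scalemxAr LJ scaler0 subr0.
by rewrite {1}L_eq mulmxBl mulmxV ?K_unit // -scalemxAl JKi.
Qed.

Lemma X0L : X0 *m L = Pm.
Proof.
rewrite /X0 mulmxBl -scalemxAl JL scaler0 subr0.
by rewrite {1}L_eq mulmxBr mulVmx ?K_unit // -scalemxAr KiJ.
Qed.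

Lemma JX0 : Jm *m X0 = 0.
Proof. by rewrite /X0 mulmxBr JKi -scalemxAr JJ scalerA mulVf ?Nneq0 // scale1r subrr. Qed.

Lemma X0J : X0 *m Jm = 0.
Proof. by rewrite /X0 mulmxBl KiJ -scalemxAl JJ scalerA mulVf ?Nneq0 // scale1r subrr. Qed.

Lemma X0tr : X0^T = X0.
Proof. by rewrite /X0 linearB linearZ /= trmx_inv Ktr Jtr. Qed.

Lemma penrose_X0 : penrose L X0.
Proof.
split.
- by rewrite LX0 /Pm mulmxBl mul1mx -scalemxAl JL scaler0 subr0.
- by rewrite X0L /Pm mulmxBl mul1mx -scalemxAl JX0 scaler0 subr0.
- by rewrite LX0 Ptr.
- by rewrite X0L Ptr.
Qed.

Lemma pinv_eq : pinv L = X0.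
Proof.
apply: penrose_uniq (penrose_X0).
by apply: (@xgetPex _ 0 [set X | penrose L X]); exists X0; exact: penrose_X0.
Qed.

Lemma pinv_tr : (pinv L)^T = pinv L.
Proof. by rewrite pinv_eq X0tr. Qed.

Lemma L_pinv : L *m pinv L = Pm.
Proof. by rewrite pinv_eq LX0. Qed.

Lemma pinv_P : pinv L *m Pm = pinv L.
Proof. by rewrite pinv_eq /Pm mulmxBr mulmx1 -scalemxAr X0J scaler0 subr0. Qed.

Lemma pinv_L_pinv : pinv L *m L *m pinv L = pinv L.
Proof. by rewrite pinv_eq; case: penrose_X0. Qed.

End Pinv.


Lemma qf_scalev n (M : 'M[R]_n) c x : qf M (c *: x) = c ^+ 2 * qf M x.
Proof. by rewrite /qf -scalemxAr dotZl dotZr mulrA expr2. Qed.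

Lemma bernoulli (h : R) m : 0 <= h -> 1 + m%:R * h <= (1 + h) ^+ m.
Proof.
move=> h0; elim: m => [|m IH]; first by rewrite mul0r addr0 expr0.
rewrite exprS -natr1; have hm : 0 <= m%:R * h by rewrite mulr_ge0.
nra.
Qed.

Lemma archi_contra (C h : R) : 0 < h -> (forall e : nat, e%:R * h <= C) -> False.
Proof.
move=> hh H.
have hb := @archi_boundP R (`|C| / h) (ltac:(by rewrite divr_ge0 // ltW)).
have := H (Num.bound (`|C| / h)).
rewrite -ler_pdivlMr // => h1.
have h2 : C / h <= `|C| / h by rewrite ler_pM2r ?invr_gt0 // ler_norm.
have := lt_le_trans (le_lt_trans h1 (le_lt_trans h2 hb)) (lexx _).
by rewrite ltxx.
Qed.

Section Key.
Variable k : nat.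
Local Notation N := k.+1.
Variables A B : 'M[R]_N.
Hypothesis As : A^T = A.
Hypothesis Bs : B^T = B.
Hypothesis Ap : forall x, 0 <= qf A x.
Hypothesis Bp : forall x, 0 <= qf B x.
Hypothesis B1 : B *m ones N = 0.
Hypothesis Ads : (pinv A)^T = pinv A.
Hypothesis AAd : A *m pinv A = Pm k.

Let T := pinv A *m B.
Let a := spec_norm T.

Lemma BP : B *m Pm k = B.
Proof. by rewrite /Pm mulmxBr mulmx1 -scalemxAr /Jm mulmxA B1 mul0mx scaler0 subr0. Qed.

Lemma PB : Pm k *m B = B.
Proof. by rewrite -[LHS]trmxK trmx_mul Bs Ptr BP Bs. Qed.

Lemma AdA : pinv A *m A = Pm k.
Proof. by rewrite -[pinv A *m A]trmxK trmx_mul As Ads AAd Ptr. Qed.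

Lemma SA u v : dot (T *m u) (A *m v) = dot u (A *m (T *m v)).
Proof.
transitivity (dot u (B *m v)).
  rewrite /T dotC dot_mul trmx_mul Bs Ads.
  by rewrite -mulmxA (mulmxA (pinv A)) AdA mulmxA BP dotC.
by rewrite /T mulmxA (mulmxA A) AAd PB.
Qed.

Let Tk j (x : 'cV[R]_N) := iter j (mulmx T) x.
Let m x j := dot x (A *m Tk j x).

Lemma m_shift x i j : dot (Tk i x) (A *m Tk j x) = m x (i + j).
Proof.
elim: i j => [|i IH] j //=.
by rewrite SA (_ : T *m Tk j x = Tk j.+1 x) // IH addSnnS.
Qed.

Lemma m1E x : m x 1 = qf B x.
Proof. by rewrite /m /= /T /qf mulmxA (mulmxA A) AAd PB. Qed.

Lemma m_even_ge0 x j : 0 <= m x (j + j).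
Proof. by rewrite -m_shift; apply: Ap. Qed.

Lemma m_CS x j : m x j ^+ 2 <= m x 0 * m x (j + j).
Proof.
rewrite -m_shift /m.
by apply: (CS _ _ As Ap).
Qed.

Lemma m_pow x e : m x 1 ^+ (2 ^ e) <= m x 0 ^+ (2 ^ e).-1 * m x (2 ^ e).
Proof.
elim: e => [|e IH]; first by rewrite expn0 expr1 expr0 mul1r.
have hM : (0 < 2 ^ e)%N by rewrite expn_gt0.
have e1 : (2 ^ e.+1 = 2 ^ e + 2 ^ e)%N by rewrite expnS mul2n addnn.
have e2 : ((2 ^ e.+1).-1 = (2 ^ e).-1 + (2 ^ e).-1 + 1)%N.
  by rewrite e1; move: hM; set z := (2 ^ e)%N; lia.
have h0 : 0 <= m x 1 by rewrite m1E; apply: Bp.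
have hm0 : 0 <= m x 0 by have := m_even_ge0 x 0.
rewrite e2 e1 !exprD expr1.
set P := m x 1 ^+ (2 ^ e)%N in IH *.
set Q := m x 0 ^+ (2 ^ e)%N.-1 in IH *.
have hP : 0 <= P by rewrite exprn_ge0.
have hQ : 0 <= Q by rewrite exprn_ge0.
have hCS := m_CS x (2 ^ e).
have hME := m_even_ge0 x (2 ^ e).
have hPP : P * P <= (Q * m x (2 ^ e)) * (Q * m x (2 ^ e)).
  by apply: ler_pM => //.
apply: le_trans hPP _.
have -> : (Q * m x (2 ^ e)) * (Q * m x (2 ^ e)) = Q * Q * (m x (2 ^ e) ^+ 2) by rewrite expr2; ring.
rewrite -(mulrA (Q * Q)); apply: ler_wpM2l => //; first by rewrite mulr_ge0.
Qed.

Lemma Tk_le x j : norm2 (Tk j x) <= a ^+ j * norm2 x.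
Proof.
elim: j => [|j IH]; first by rewrite expr0 mul1r.
rewrite /= exprS -mulrA; apply: le_trans (spec_le _ _) _.
by apply: ler_wpM2l => //; apply: spec_ge0.
Qed.

Lemma m_ub x j : m x j <= norm2 (A *m x) * norm2 x * a ^+ j.
Proof.
rewrite /m (dot_sym _ _ As) dotC; apply: le_trans (dot_le _ _) _.
rewrite -mulrA ler_wpM2l ?norm2_ge0 // mulrC; exact: Tk_le.
Qed.

Lemma key x : qf B x <= a * qf A x.
Proof.
set r := qf B x; set q := qf A x; set C := norm2 (A *m x) * norm2 x.
have hr : 0 <= r by apply: Bp. have hq : 0 <= q by apply: Ap.
have hC : 0 <= C by rewrite mulr_ge0 ?norm2_ge0.
have ha : 0 <= a by apply: spec_ge0.
have H e : r ^+ (2 ^ e) <= q ^+ (2 ^ e).-1 * (C * a ^+ (2 ^ e)).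
  rewrite /r -m1E; apply: le_trans (m_pow x e) _.
  rewrite /q /qf -/(m x 0); apply: ler_wpM2l; first by rewrite exprn_ge0 // Ap.
  exact: m_ub.
rewrite leNgt; apply/negP => hlt.
have [q0|qp] := eqVneq q 0.
  have := H 1%N; rewrite q0 /= expr0n /= mul0r => h.
  have : r ^+ 2 <= 0 by [].
  rewrite q0 mulr0 in hlt. nra.
have qp' : 0 < q by rewrite lt0r qp hq.
have [a0|ap] := eqVneq a 0.
  have := H 0%N; rewrite a0 /= expr1 mulr0 mulr0 => h.
  rewrite a0 mul0r in hlt. by move: (le_lt_trans h hlt); rewrite ltxx.
have ap' : 0 < a by rewrite lt0r ap ha.
set rho := r / (a * q).
have hrho : 1 < rho by rewrite /rho ltr_pdivlMr ?mulr_gt0 // mul1r.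
have Hr e : rho ^+ (2 ^ e) * q <= C.
  have := H e; rewrite /rho expr_div_n.
  have hM : (0 < 2 ^ e)%N by rewrite expn_gt0.
  have hq1 : q ^+ (2 ^ e) = q ^+ (2 ^ e).-1 * q by rewrite -exprSr prednK.
  rewrite exprMn hq1 => h.
  have hpos : 0 < a ^+ (2 ^ e) * (q ^+ (2 ^ e).-1 * q) by rewrite mulr_gt0 ?exprn_gt0 // mulr_gt0 ?exprn_gt0.
  rewrite -(ler_pM2r hpos).
  set D := a ^+ (2 ^ e) * (q ^+ (2 ^ e).-1 * q) in hpos *.
  have hD : D != 0 by rewrite gt_eqF.
  rewrite (_ : r ^+ (2 ^ e) / D * q * D = r ^+ (2 ^ e) * q); last by field.
  apply: le_trans (ler_wpM2r (ltW qp') h) _.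
  by rewrite le_eqVlt; apply/orP; left; apply/eqP; rewrite /D; ring.
apply: (@archi_contra (C / q) (rho - 1)); first by rewrite subr_gt0.
move=> e.
have h1 := bernoulli e (ltW (ltac:(by rewrite subr_gt0) : 0 < rho - 1)).
have erho : 1 + (rho - 1) = rho by ring.
rewrite erho in h1.
have h2 : rho ^+ e <= rho ^+ (2 ^ e).
  by rewrite ler_eXn2l // ltnW // ltn_expl.
rewrite ler_pdivlMr //.
apply: le_trans (Hr e); rewrite ler_pM2r //.
apply: le_trans h2; apply: le_trans h1; lra.
Qed.

End Key.


Section Cmp.
Variable k : nat.
Local Notation N := k.+1.
Variable M : 'M[R]_N.
Hypothesis Ms : M^T = M.
Hypothesis Mp : forall x, 0 <= qf M x.
Hypothesis Mds : (pinv M)^T = pinv M.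
Hypothesis MMd : M *m pinv M = Pm k.
Hypothesis MdP : pinv M *m Pm k = pinv M.
Hypothesis MdMMd : pinv M *m M *m pinv M = pinv M.

Lemma qf_Md x : qf M (pinv M *m x) = qf (pinv M) x.
Proof. by rewrite /qf dotC dot_mul Mds !mulmxA MdMMd dotC. Qed.

Lemma var_ub u x : 2 * dot u (Pm k *m x) - qf M u <= qf (pinv M) x.
Proof.
have := Mp (1 *: u + (-1) *: (pinv M *m x)).
rewrite qf_comb // qf_Md mulmxA MMd.
set p := qf M u; set d := dot u (Pm k *m x); set z := qf (pinv M) x.
move=> h; lra.
Qed.

Lemma var_eq x : qf (pinv M) x = 2 * dot (pinv M *m x) (Pm k *m x) - qf M (pinv M *m x).
Proof.
rewrite qf_Md dotC dot_mul Mds mulmxA MdP dotC /qf; ring.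
Qed.

End Cmp.

Lemma cmp_lo k (A L : 'M[R]_k.+1) s :
  0 < s -> A^T = A -> L^T = L -> (forall x, 0 <= qf A x) ->
  (pinv A)^T = pinv A -> A *m pinv A = Pm k -> pinv A *m Pm k = pinv A ->
  pinv A *m A *m pinv A = pinv A ->
  (pinv L)^T = pinv L -> L *m pinv L = Pm k -> pinv L *m Pm k = pinv L ->
  pinv L *m L *m pinv L = pinv L ->
  (forall y, s * qf A y <= qf L y) ->
  forall x, s * qf (pinv L) x <= qf (pinv A) x.
Proof.
move=> hs As Ls Ap Ads AAd AdP AdAAd Lds LLd LdP LdLLd hAL x.
rewrite (var_eq Lds LdP LdLLd x).
set y := pinv L *m x.
have h1 := var_ub As Ap Ads AAd AdAAd (s *: y) x.
rewrite qf_scalev dotZl in h1.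
have h2 := hAL y.
set D := dot y (Pm k *m x) in h1 *.
nra.
Qed.

Lemma cmp_hi k (A L : 'M[R]_k.+1) t :
  0 < t -> A^T = A -> L^T = L -> (forall x, 0 <= qf L x) ->
  (pinv A)^T = pinv A -> A *m pinv A = Pm k -> pinv A *m Pm k = pinv A ->
  pinv A *m A *m pinv A = pinv A ->
  (pinv L)^T = pinv L -> L *m pinv L = Pm k -> pinv L *m Pm k = pinv L ->
  pinv L *m L *m pinv L = pinv L ->
  (forall y, qf L y <= t * qf A y) ->
  forall x, qf (pinv A) x <= t * qf (pinv L) x.
Proof.
move=> ht As Ls Lp Ads AAd AdP AdAAd Lds LLd LdP LdLLd hAL x.
rewrite (var_eq Ads AdP AdAAd x).
set v := pinv A *m x.
have h1 := var_ub Ls Lp Lds LLd LdLLd (t^-1 *: v) x.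
rewrite qf_scalev dotZl in h1.
have h2 := hAL v.
set D := dot v (Pm k *m x) in h1 *.
set Q := qf L v in h1 h2. set Z := qf (pinv L) x in h1 *.
set Y := qf A v in h2 *.
have hti : t^-1 * t = 1 by rewrite mulVf ?gt_eqF.
have hti2 : 0 < t^-1 by rewrite invr_gt0.
have e : t * (2 * (t^-1 * D) - t^-1 ^+ 2 * Q) = 2 * D - t^-1 * Q.
  by rewrite expr2; field; rewrite gt_eqF.
have h3 : t^-1 * Q <= Y.
  by rewrite -(ler_pM2l ht) mulrA (mulrC t) hti mul1r.
have h4 : t * (2 * (t^-1 * D) - t^-1 ^+ 2 * Q) <= t * Z by rewrite ler_pM2l.
rewrite e in h4. lra.
Qed.


Lemma psd_of n (M : 'M[R]_n) : M^T = M -> (forall x, 0 <= qf M x) -> psd M.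
Proof. by move=> h1 h2; split => // x; rewrite -mulmxA; exact: h2. Qed.

Lemma trZ_sym n (c : R) (X : 'M[R]_n) : X^T = X -> (c *: X)^T = c *: X.
Proof. by move=> h; rewrite linearZ /= h. Qed.

Lemma trB_sym n (X Y : 'M[R]_n) : X^T = X -> Y^T = Y -> (X - Y)^T = X - Y.
Proof. by move=> h1 h2; rewrite linearB /= h1 h2. Qed.

Lemma psd0 (M : 'M[R]_0) : psd M.
Proof.
split; first by apply/matrixP => -[i hi].
by move=> x; rewrite mxE big_ord0.
Qed.

End Aux.

Unset Implicit Arguments.
Local Close Scope classical_set_scope.

Theorem proposition3 (R : realType) (n : nat) (adj : rel 'I_n)
  (w0 w alpha : 'I_n -> 'I_n -> R) (b : R) :
  simple_graph adj ->
  connected_graph adj ->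
  (forall i j : 'I_n, (i < j)%N -> adj i j -> 0 < w0 i j) ->
  (forall i j : 'I_n, (i < j)%N -> adj i j -> 0 <= alpha i j < 1) ->
  (forall i j : 'I_n, (i < j)%N -> adj i j ->
     (1 - alpha i j) * w0 i j <= w i j <= (1 + alpha i j) * w0 i j) ->
  b != 0 ->
  let L0 := laplacian adj w0 in
  let L := laplacian adj w in
  let Delta := laplacian adj (fun i j => alpha i j * w0 i j) in
  let a := spec_norm (pinv L0 *m Delta) in
  a < 1 ->
  let d := spec_norm (Delta *m pinv L0) in
  let eps_minus := d / (1 + d) in
  let eps_plus := d / (1 - d) in
  let Sigma0 := steady_cov b L0 in
  let Sigma := steady_cov b L in
  (loewner_le ((1 - a) *: L0) L /\ loewner_le L ((1 + a) *: L0)) /\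
  (loewner_le ((1 - eps_minus) *: Sigma0) Sigma /\
   loewner_le Sigma ((1 + eps_plus) *: Sigma0)).
Proof.
case: n adj w0 w alpha => [|k] adj w0 w alpha.
  by move=> *; split; split; apply: psd0.
move=> hsg hconn hw0 halpha hw hb L0 L Delta a ha1 d em ep S0 S.
have hwp : forall i j : 'I_k.+1, (i < j)%N -> adj i j -> 0 < w i j.
  move=> i j hij hadj; have /andP [h1 _] := hw i j hij hadj.
  have /andP [h2 h3] := halpha i j hij hadj.
  apply: lt_le_trans h1; apply: mulr_gt0; [by rewrite subr_gt0 | exact: hw0].
have hDp : forall i j : 'I_k.+1, (i < j)%N -> adj i j -> 0 <= alpha i j * w0 i j.
  move=> i j hij hadj; have /andP [h2 h3] := halpha i j hij hadj.
  by rewrite mulr_ge0 // ltW // hw0.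
have kerP : forall (v : 'I_k.+1 -> 'I_k.+1 -> R), (forall i j : 'I_k.+1, (i < j)%N -> adj i j -> 0 < v i j) ->
    forall x : 'cV[R]_k.+1, laplacian adj v *m x = 0 -> forall i j, x i 0 = x j 0.
  move=> v hv x hx.
  have hq : qf (laplacian adj v) x = 0 by rewrite /qf hx dot0r.
  exact: lap_kernel hsg hconn hv hq.
have As : L0^T = L0 := lap_tr adj w0.
have Ls : L^T = L := lap_tr adj w.
have Bs : Delta^T = Delta := lap_tr adj _.
have A1 : L0 *m ones R k.+1 = 0 := lap_ones adj w0.
have L1 : L *m ones R k.+1 = 0 := lap_ones adj w.
have B1 : Delta *m ones R k.+1 = 0 := lap_ones adj _.
have Ak := kerP w0 hw0. have Lk := kerP w hwp.
have Ap : forall x, 0 <= qf L0 x.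
  by move=> x; apply: qf_lap_ge0 => i j hij hadj; apply: ltW; apply: hw0.
have Lp : forall x, 0 <= qf L x.
  by move=> x; apply: qf_lap_ge0 => i j hij hadj; apply: ltW; apply: hwp.
have Bp : forall x, 0 <= qf Delta x.
  by move=> x; apply: qf_lap_ge0.
have Ads := pinv_tr As A1 Ak.
have AAd := L_pinv As A1 Ak.
have AdP := pinv_P As A1 Ak.
have AdAAd := pinv_L_pinv As A1 Ak.
have Lds := pinv_tr Ls L1 Lk.
have LLd := L_pinv Ls L1 Lk.
have LdP := pinv_P Ls L1 Lk.
have LdLLd := pinv_L_pinv Ls L1 Lk.
have hkey : forall x, qf Delta x <= a * qf L0 x.
  by move=> x; apply: (key As Bs Ap Bp B1 Ads AAd).
have hlo : forall x, qf L0 x - qf Delta x <= qf L x.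
  move=> x; rewrite -qfB -lapB; apply: qf_lap_le => i j hij hadj.
  by have /andP [h1 _] := hw i j hij hadj; rewrite -{1}(mul1r (w0 i j)) -mulrBl.
have hhi : forall x, qf L x <= qf L0 x + qf Delta x.
  move=> x; rewrite -qfD -lapD; apply: qf_lap_le => i j hij hadj.
  by have /andP [_ h1] := hw i j hij hadj; rewrite mulrDl mul1r in h1.
have ha0 : 0 <= a by apply: spec_ge0.
have hda : d = a.
  by rewrite /d -Bs -Ads -trmx_mul spec_trE.
have hs : forall y, (1 - a) * qf L0 y <= qf L y.
  move=> y; have := hlo y; have := hkey y; lra.
have ht : forall y, qf L y <= (1 + a) * qf L0 y.
  move=> y; have := hhi y; have := hkey y; lra.
have hs0 : 0 < 1 - a by lra.
have ht0 : 0 < 1 + a by lra.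
have c1 := cmp_lo hs0 As Ls Ap Ads AAd AdP AdAAd Lds LLd LdP LdLLd hs.
have c2 := cmp_hi ht0 As Ls Lp Ads AAd AdP AdAAd Lds LLd LdP LdLLd ht.
have hc : 0 <= b ^+ 2 / 2 by rewrite divr_ge0 // sqr_ge0.
split; split.
- apply: psd_of; first by rewrite linearB linearZ /= Ls As.
  move=> x; rewrite qfB qfZ; have := hs x; lra.
- apply: psd_of; first by rewrite linearB linearZ /= Ls As.
  move=> x; rewrite qfB qfZ; have := ht x; lra.
- apply: psd_of; first by rewrite /S /S0 /steady_cov; apply: trB_sym; do ! apply: trZ_sym.
  move=> x; rewrite /S /S0 /steady_cov qfB !qfZ /em hda.
  have e : 1 - a / (1 + a) = (1 + a)^-1 by field; rewrite gt_eqF.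
  rewrite e; have h := c2 x.
  set X := qf (pinv L) x in h *; set Y := qf (pinv L0) x in h *.
  have hti : 0 < (1 + a)^-1 by rewrite invr_gt0.
  have h' : (1 + a)^-1 * Y <= X.
    by rewrite -(ler_pM2l ht0) mulrA mulfV ?mul1r // gt_eqF.
  rewrite subr_ge0 mulrCA; apply: ler_wpM2l => //.
- apply: psd_of; first by rewrite /S /S0 /steady_cov; apply: trB_sym; do ! apply: trZ_sym.
  move=> x; rewrite /S /S0 /steady_cov qfB !qfZ /ep hda.
  have e : 1 + a / (1 - a) = (1 - a)^-1 by field; rewrite gt_eqF.
  rewrite e; have h := c1 x.
  set X := qf (pinv L) x in h *; set Y := qf (pinv L0) x in h *.
  have h' : X <= (1 - a)^-1 * Y.
    by rewrite -(ler_pM2l hs0) mulrA mulfV ?mul1r // gt_eqF.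
  rewrite subr_ge0 mulrCA; apply: ler_wpM2l => //.
Qed.
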